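(* Let $n\ge2$ and $D_0>0$, and assume $\alpha>(n-1)\beta>0$. Let $p^a\in\mathbb{R}^n_{\ge0}$. Define the $n\times n$ matrix $A_n=(\alpha+\beta)I_n-\beta J_n$ (diagonal entries $\alpha$, off-diagonal entries $-\beta$), and let $E_n$ be the all-ones vector in $\mathbb{R}^n$. Consider the ex ante regulation game restricted to profiles with strictly positive demands. Among such profiles, a pure-strategy Nash equilibrium exists if and only if every entry of the vector $$(A_n+2\alpha I_n)^{-1}\,[D_0E_n+A_np^a]$$ is strictly positive. When this holds: - for every choice of the payment vector $p^d\in\mathbb{R}^n$ there is exactly one such equilibrium, so the equilibrium is unique up to a free choice of $p^d$; - there are constants $g_i,h_i$, depending only on $p^a,D_0,\alpha,\beta$, such that at equilibrium $p^s_i=g_i-p^d_i$ and $p^c_i=h_i+p^d_i$ for each $i$; - the net internaut price $p^s_i+p^c_i=g_i+h_i$ for each CP $i$ is unique and independent of $p^d$; - the equilibrium demand vector is unique and does not depend on $p^d$; - the revenues per unit demand, and hence the total revenues of the ISP and of every CP, do not depend on $p^d$.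
   Context: Setting: one ISP and $n$ content providers CP $1,\dots,n$. - $p^s=(p^s_1,\dots,p^s_n)$ are the ISP's prices per unit demand to internauts of CP $i$; $p^s$ is chosen by the ISP. - $p^c_i$ is CP $i$'s price per unit demand to its internauts, chosen by CP $i$. - $p^d_i$ is the payment per unit demand from CP $i$ to the ISP. - $p^a_i\ge0$ is CP $i$'s advertising revenue per unit demand. On the set of profiles where all demands are strictly positive, the demand for CP $i$'s content is $$d_i=D_0-\alpha(p^s_i+p^c_i)+\beta\sum_{j\ne i}(p^s_j+p^c_j).$$ Payoffs are $U_{ISP}=\sum_i d_i(p^s_i+p^d_i)$ and $U_{CP,i}=d_i(p^c_i+p^a_i-p^d_i)$. Ex ante regulation game: 1. A regulator first sets the vector $p^d$. 2. Then the ISP chooses $p^s$ and each CP $i$ chooses $p^c_i$, all simultaneously. 3. Internauts generate the demands. Strategies are jointly constrained so that all $d_i>0$. An equilibrium is a profile in this set from which no player can profitably deviate unilaterally while remaining in the set. The regulator chooses each $p^d_i$ to maximize $\big(d_i(p^s_i+p^d_i)\big)^{\gamma_i}\big(d_i(p^c_i+p^a_i-p^d_i)\big)^{1-\gamma_i}$ at the induced equilibrium, with weights $\gamma_i\in(0,1)$. *)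

(* Defs.v *)
From HB Require Import structures.
From mathcomp Require Import all_boot all_order all_algebra.
From mathcomp Require Import reals.
Set Implicit Arguments. Unset Strict Implicit. Unset Printing Implicit Defensive.
Import Order.TTheory GRing.Theory Num.Theory.
Local Open Scope ring_scope.

Section Game.
Variables (R : realType) (n : nat).

Definition demand (D0 alpha beta : R) (ps pc : 'I_n -> R) (i : 'I_n) : R :=
  D0 - alpha * (ps i + pc i) + beta * \sum_(j < n | j != i) (ps j + pc j).

Definition U_ISP (D0 alpha beta : R) (pd ps pc : 'I_n -> R) : R :=
  \sum_(i < n) demand D0 alpha beta ps pc i * (ps i + pd i).

Definition U_CP (D0 alpha beta : R) (pa pd ps pc : 'I_n -> R) (i : 'I_n) : R :=
  demand D0 alpha beta ps pc i * (pc i + pa i - pd i).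

Definition feasible (D0 alpha beta : R) (ps pc : 'I_n -> R) : Prop :=
  forall i, 0 < demand D0 alpha beta ps pc i.

Definition upd (pc : 'I_n -> R) (i : 'I_n) (c : R) : 'I_n -> R :=
  fun j => if j == i then c else pc j.

(* Nash equilibrium of stage 2 (given pd) within the feasible set *)
Definition is_equilibrium (D0 alpha beta : R) (pa pd ps pc : 'I_n -> R) : Prop :=
  [/\ feasible D0 alpha beta ps pc,
      (forall ps', feasible D0 alpha beta ps' pc ->
         U_ISP D0 alpha beta pd ps' pc <= U_ISP D0 alpha beta pd ps pc) &
      (forall (i : 'I_n) (c : R), feasible D0 alpha beta ps (upd pc i c) ->
         U_CP D0 alpha beta pa pd ps (upd pc i c) i <= U_CP D0 alpha beta pa pd ps pc i)].

Definition A_mx (alpha beta : R) : 'M[R]_n :=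
  (alpha + beta)%:M - beta *: const_mx 1.

Definition E_vec : 'cV[R]_n := const_mx 1.

Definition eq_vec (D0 alpha beta : R) (pa : 'I_n -> R) : 'cV[R]_n :=
  invmx (A_mx alpha beta + (2 * alpha)%:M) *m
    (D0 *: E_vec + A_mx alpha beta *m \col_i pa i).

Definition eq_condition (D0 alpha beta : R) (pa : 'I_n -> R) : Prop :=
  forall i : 'I_n, 0 < eq_vec D0 alpha beta pa i ord0.

End Game.

(* Main.v *)
Require Import Defs.
From HB Require Import structures.
From mathcomp Require Import all_boot all_order all_algebra.
From mathcomp Require Import reals.
From mathcomp Require Import ring lra.
Import Order.TTheory GRing.Theory Num.Theory.
Local Open Scope ring_scope.

Set Implicit Arguments. Unset Strict Implicit.


Lemma demandE (R : realType) (n : nat) D0 alpha beta (ps pc : 'I_n -> R) i :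
  demand D0 alpha beta ps pc i =
  D0 - (alpha + beta) * (ps i + pc i) + beta * \sum_j (ps j + pc j).
Proof.
rewrite /demand [X in _ = _ + beta * X](bigD1 i) //=. ring.
Qed.

Lemma demand_shift (R : realType) (n : nat) D0 alpha beta (ps pc ps' pc' v : 'I_n -> R) :
  (forall j, ps' j + pc' j = ps j + pc j + v j) -> forall i,
  demand D0 alpha beta ps' pc' i =
  demand D0 alpha beta ps pc i - ((alpha + beta) * v i - beta * \sum_j v j).
Proof.
move=> H i; rewrite !demandE H.
under eq_bigr do rewrite H.
rewrite big_split /=. ring.
Qed.

Lemma sum_delta (R : realType) (n : nat) (i : 'I_n) (t : R) :
  \sum_j (if j == i then t else 0) = t.
Proof.
rewrite (bigD1 i) //= eqxx big1 ?addr0 // => j /negbTE ->. by [].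
Qed.

Lemma rowsum (R : realType) (n : nat) (a b : R) (v : 'I_n -> R) i :
  \sum_k (a%:M - b *: const_mx 1 : 'M[R]_n) i k * v k = a * v i - b * \sum_k v k.
Proof.
under eq_bigr do rewrite !mxE.
rewrite (bigD1 i) //= eqxx.
rewrite [X in _ + X](eq_bigr (fun k => - b * v k)); last first.
  by move=> k; rewrite eq_sym => /negbTE ->; rewrite mulr0n; ring.
rewrite -mulr_sumr [in RHS](bigD1 i) //=. ring.
Qed.

Lemma small_eps (R : realType) (n : nat) (a b : 'I_n -> R) (K : R) :
  (forall j, 0 < a j) -> exists e, [/\ 0 < e, e * K < 1 & forall j, e * b j < a j].
Proof.
move=> Ha.
set S := \sum_j (`|b j| / a j).
have S0 : 0 <= S by apply: sumr_ge0 => j _; rewrite divr_ge0 // ltW.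
set D := 1 + `|K| + S.
have D0 : 0 < D by rewrite /D; have := normr_ge0 K; lra.
exists D^-1; split; first by rewrite invr_gt0.
- rewrite ltr_pdivrMl // mulr1 (le_lt_trans (ler_norm K)) //; rewrite /D; lra.
- move=> j; have aj := Ha j.
  have hj : `|b j| / a j <= S.
    by rewrite /S (bigD1 j) //= lerDl sumr_ge0 // => k _; rewrite divr_ge0 // ltW.
  rewrite (le_lt_trans (ler_wpM2l _ (ler_norm (b j)))) ?invr_ge0 ?ltW //.
  rewrite ltr_pdivrMl // -(ltr_pdivrMr _ _ aj).
  rewrite /D; have := normr_ge0 K; lra.
Qed.



Definition Gv (R : realType) (n : nat) D0 alpha beta (pd ps pc : 'I_n -> R) k :=
  demand D0 alpha beta ps pc k -
  ((alpha + beta) * (ps k + pd k) - beta * \sum_j (ps j + pd j)).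

Lemma U_ISP_shift (R : realType) (n : nat) D0 alpha beta (pd ps pc ps' v : 'I_n -> R) :
  (forall j, ps' j = ps j + v j) ->
  U_ISP D0 alpha beta pd ps' pc = U_ISP D0 alpha beta pd ps pc
   + \sum_k v k * Gv D0 alpha beta pd ps pc k
   - ((alpha + beta) * \sum_k v k ^+ 2 - beta * (\sum_k v k) ^+ 2).
Proof.
move=> H.
have Hs : forall j, ps' j + pc j = ps j + pc j + v j by move=> j; rewrite H; ring.
rewrite /U_ISP /Gv.
under eq_bigr do rewrite (demand_shift D0 alpha beta Hs) H.
set V := \sum_k v k; set Q := \sum_j (ps j + pd j).
pose d := demand D0 alpha beta ps pc.
pose q j := ps j + pd j.
transitivity (\sum_i (d i * q i + d i * v i + (- (alpha + beta)) * (v i * q i) + (-(alpha+beta)) * (v i ^+ 2) + (beta * V) * q i + (beta * V) * v i)).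
  by apply: eq_bigr => i _; rewrite /d /q; ring.
rewrite !big_split /= -!mulr_sumr.
have -> : \sum_k v k * (demand D0 alpha beta ps pc k - ((alpha + beta) * (ps k + pd k) - beta * Q)) =
   \sum_i (d i * v i + (- (alpha + beta)) * (v i * q i) + (beta * Q) * v i).
  by apply: eq_bigr => i _; rewrite /d /q; ring.
rewrite !big_split /= -!mulr_sumr.
rewrite expr2 mulr_sumr.
rewrite [\sum_i demand _ _ _ _ _ i * _](eq_bigr (fun i => d i * q i)) //.
rewrite /V /Q big_split /=. ring.
Qed.



Lemma cs_sum (R : realType) (n : nat) (v : 'I_n -> R) :
  (\sum_k v k) ^+ 2 <= n%:R * \sum_k v k ^+ 2.
Proof.
have H : 0 <= \sum_i \sum_j (v i - v j) ^+ 2.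
  by apply: sumr_ge0 => i _; apply: sumr_ge0 => j _; apply: sqr_ge0.
have E : \sum_i \sum_j (v i - v j) ^+ 2 =
    2%:R * (n%:R * \sum_k v k ^+ 2) - 2%:R * (\sum_k v k) ^+ 2.
  transitivity (\sum_i (n%:R * v i ^+ 2 + \sum_k v k ^+ 2 + (-2%:R * v i) * \sum_k v k)).
    apply: eq_bigr => i _.
    transitivity (\sum_j (v i ^+ 2 + v j ^+ 2 + (-2%:R * v i) * v j)).
      by apply: eq_bigr => j _; ring.
    rewrite !big_split /= sumr_const card_ord -mulr_sumr -[v i ^+ 2 *+ n]mulr_natl. by [].
  rewrite !big_split /= sumr_const card_ord -!mulr_sumr -mulr_suml -[(\sum_(k < n) v k ^+ 2) *+ n]mulr_natl -mulr_sumr.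
  ring.
lra.
Qed.

Lemma FOC_ISP (R : realType) (n : nat) D0 alpha beta (pa pd ps pc : 'I_n -> R) :
  0 <= beta ->
  is_equilibrium D0 alpha beta pa pd ps pc ->
  forall k, Gv D0 alpha beta pd ps pc k = 0.
Proof.
move=> hb [feas hisp _].
set G := Gv D0 alpha beta pd ps pc.
pose w i := (alpha + beta) * G i - beta * \sum_j G j.
have [e [e0 eK ew]] := small_eps w (alpha + beta) feas.
pose ps' j := ps j + e * G j.
have hfe : feasible D0 alpha beta ps' pc.
  move=> j; rewrite (demand_shift D0 alpha beta (ps := ps) (pc := pc) (v := fun j => e * G j)); last first.
    by move=> i; rewrite /ps'; ring.
  rewrite -mulr_sumr; have := ew j; rewrite /w; lra.
have := hisp _ hfe.
rewrite (U_ISP_shift D0 alpha beta pd (ps := ps) pc (v := fun j => e * G j)) //.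
set S := \sum_k G k ^+ 2.
have S0 : 0 <= S by apply: sumr_ge0 => k _; apply: sqr_ge0.
have -> : \sum_k e * G k * Gv D0 alpha beta pd ps pc k = e * S.
  by rewrite mulr_sumr; apply: eq_bigr => k _; rewrite -/G; ring.
have -> : \sum_k (e * G k) ^+ 2 = e ^+ 2 * S.
  by rewrite mulr_sumr; apply: eq_bigr => k _; ring.
rewrite -mulr_sumr.
have T0 : 0 <= beta * (e * \sum_k G k) ^+ 2 by apply: mulr_ge0 => //; apply: sqr_ge0.
move=> h.
have h2 : e * S * (1 - e * (alpha + beta)) <= 0.
  have -> : e * S * (1 - e * (alpha + beta)) = e * S - (alpha + beta) * (e ^+ 2 * S) by ring.
  lra.
have S00 : S <= 0.
  rewrite leNgt; apply/negP => Sp.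
  have : 0 < e * S * (1 - e * (alpha + beta)).
    by apply: mulr_gt0; [apply: mulr_gt0|lra].
  lra.
have SS : S = 0 by apply/eqP; rewrite eq_le S00 S0.
move=> k; have := psumr_eq0P (fun i _ => sqr_ge0 (G i)) SS (i := k) isT.
by move=> /eqP; rewrite sqrf_eq0 => /eqP.
Qed.



Definition Hv (R : realType) (n : nat) D0 alpha beta (pa pd ps pc : 'I_n -> R) i :=
  demand D0 alpha beta ps pc i - alpha * (pc i + pa i - pd i).

Lemma demand_upd (R : realType) (n : nat) D0 alpha beta (ps pc : 'I_n -> R) i t j :
  demand D0 alpha beta ps (upd pc i (pc i + t)) j =
  demand D0 alpha beta ps pc j - ((alpha + beta) * (if j == i then t else 0) - beta * t).
Proof.
rewrite (demand_shift D0 alpha beta (ps := ps) (pc := pc) (v := fun j => if j == i then t else 0)).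
  by rewrite sum_delta.
by move=> k; rewrite /upd; case: eqP => [->|_]; ring.
Qed.

Lemma U_CP_shift (R : realType) (n : nat) D0 alpha beta (pa pd ps pc : 'I_n -> R) i t :
  U_CP D0 alpha beta pa pd ps (upd pc i (pc i + t)) i =
  U_CP D0 alpha beta pa pd ps pc i + t * Hv D0 alpha beta pa pd ps pc i - alpha * t ^+ 2.
Proof.
rewrite /U_CP demand_upd eqxx /Hv /upd eqxx. ring.
Qed.

Lemma FOC_CP (R : realType) (n : nat) D0 alpha beta (pa pd ps pc : 'I_n -> R) :
  0 < alpha ->
  is_equilibrium D0 alpha beta pa pd ps pc ->
  forall i, Hv D0 alpha beta pa pd ps pc i = 0.
Proof.
move=> ha [feas _ hcp] i.
set H := Hv D0 alpha beta pa pd ps pc i.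
pose b j := ((alpha + beta) * (if j == i then 1 else 0) - beta) * H.
have [e [e0 eK ew]] := small_eps b alpha feas.
have hfe : feasible D0 alpha beta ps (upd pc i (pc i + e * H)).
  move=> j; rewrite demand_upd.
  suff -> : (alpha + beta) * (if j == i then e * H else 0) - beta * (e * H) = e * b j
    by have := ew j; lra.
  by rewrite /b; case: (j == i); ring.
have := hcp _ _ hfe; rewrite U_CP_shift -/H => h.
have h2 : e * H ^+ 2 * (1 - e * alpha) <= 0.
  have -> : e * H ^+ 2 * (1 - e * alpha) = e * H * H - alpha * (e * H) ^+ 2 by ring.
  lra.
have HH : H ^+ 2 <= 0.
  rewrite leNgt; apply/negP => Sp.
  have : 0 < e * H ^+ 2 * (1 - e * alpha).
    by apply: mulr_gt0; [apply: mulr_gt0|lra].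
  lra.
have : H ^+ 2 == 0 by rewrite eq_le HH sqr_ge0.
by rewrite sqrf_eq0 => /eqP.
Qed.

Lemma suff_eq (R : realType) (n : nat) D0 alpha beta (pa pd ps pc : 'I_n -> R) :
  0 <= beta -> 0 <= alpha + beta - n%:R * beta -> 0 <= alpha ->
  feasible D0 alpha beta ps pc ->
  (forall k, Gv D0 alpha beta pd ps pc k = 0) ->
  (forall i, Hv D0 alpha beta pa pd ps pc i = 0) ->
  is_equilibrium D0 alpha beta pa pd ps pc.
Proof.
move=> hb hk ha feas hG hH; split => //.
- move=> ps' _.
  rewrite (U_ISP_shift D0 alpha beta pd (ps := ps) pc (v := fun j => ps' j - ps j));
    last by move=> j; ring.
  under eq_bigr do rewrite hG mulr0.
  rewrite big1_eq addr0.
  set V := \sum_k (ps' k - ps k).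
  set S := \sum_k (ps' k - ps k) ^+ 2.
  have cs := cs_sum (fun k => ps' k - ps k). rewrite -/V -/S in cs.
  have S0 : 0 <= S by apply: sumr_ge0 => k _; apply: sqr_ge0.
  have : 0 <= (alpha + beta - n%:R * beta) * S by apply: mulr_ge0.
  have : beta * V ^+ 2 <= beta * (n%:R * S) by apply: ler_wpM2l.
  lra.
- move=> i c _.
  have -> : c = pc i + (c - pc i) by ring.
  rewrite U_CP_shift hH mulr0 addr0.
  have := sqr_ge0 (c - pc i); have := ha; nra.
Qed.



Lemma sum_lin (R : realType) (n : nat) (a c : R) (f : 'I_n -> R) :
  \sum_i (a * f i + c) = a * \sum_i f i + n%:R * c.
Proof.
by rewrite big_split /= -mulr_sumr sumr_const card_ord mulr_natl.
Qed.

Lemma mx_col (R : realType) (n : nat) (a b : R) (X : 'cV[R]_n) i :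
  ((a%:M - b *: const_mx 1 : 'M[R]_n) *m X) i ord0 = a * X i ord0 - b * \sum_k X k ord0.
Proof. by rewrite mxE rowsum. Qed.

Lemma A2E (R : realType) (n : nat) (alpha beta c : R) :
  A_mx n alpha beta + c%:M = (alpha + beta + c)%:M - beta *: const_mx 1.
Proof.
apply/matrixP => i j; rewrite !mxE; case: (i == j) => /=; ring.
Qed.

Lemma unit_M (R : realType) (n : nat) (a b : R) :
  a != 0 -> a - n%:R * b != 0 -> (a%:M - b *: const_mx 1 : 'M[R]_n) \in unitmx.
Proof.
move=> ha hk.
pose c := b / (a - n%:R * b).
pose N := \matrix_(k, j) (a^-1 * ((if k == j then 1 else 0) + c)) : 'M[R]_n.
suff E : (a%:M - b *: const_mx 1 : 'M[R]_n) *m N = 1%:M by case: (mulmx1_unit E).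
apply/matrixP => i j; rewrite mxE.
rewrite (eq_bigr (fun k => (a%:M - b *: const_mx 1 : 'M[R]_n) i k * N k j)) //.
rewrite rowsum.
have -> : \sum_k N k j = a^-1 * (1 + n%:R * c).
  under eq_bigr do rewrite mxE.
  rewrite -mulr_sumr big_split /= sum_delta sumr_const card_ord mulr_natl. by [].
rewrite !mxE /c; case: (i == j) => /=; field; rewrite ha hk //.
Qed.



Lemma rhs_entry (R : realType) (n : nat) D0 alpha beta (pa : 'I_n -> R) i :
  (D0 *: E_vec R n + A_mx n alpha beta *m \col_i pa i) i ord0 =
  D0 + (alpha + beta) * pa i - beta * \sum_k pa k.
Proof.
rewrite mxE [in X in _ + X = _]/A_mx mx_col !mxE.
under eq_bigr do rewrite mxE.
ring.
Qed.

Lemma eqvec_sys (R : realType) (n : nat) D0 alpha beta (pa : 'I_n -> R) :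
  A_mx n alpha beta + (2 * alpha)%:M \in unitmx ->
  forall i, (3 * alpha + beta) * eq_vec D0 alpha beta pa i ord0
            - beta * \sum_k eq_vec D0 alpha beta pa k ord0
     = D0 + (alpha + beta) * pa i - beta * \sum_k pa k.
Proof.
move=> hu i.
have := congr1 (fun M : 'cV[R]_n => M i ord0) (mulKVmx hu (D0 *: E_vec R n + A_mx n alpha beta *m \col_i pa i)).
rewrite rhs_entry /= -/(eq_vec D0 alpha beta pa) A2E mx_col => <-.
ring.
Qed.

Lemma eqvec_char (R : realType) (n : nat) D0 alpha beta (pa z : 'I_n -> R) :
  A_mx n alpha beta + (2 * alpha)%:M \in unitmx ->
  (forall i, (3 * alpha + beta) * z i - beta * \sum_k z k
     = D0 + (alpha + beta) * pa i - beta * \sum_k pa k) ->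
  forall i, eq_vec D0 alpha beta pa i ord0 = z i.
Proof.
move=> hu hz.
have E : (A_mx n alpha beta + (2 * alpha)%:M) *m \col_i z i =
         D0 *: E_vec R n + A_mx n alpha beta *m \col_i pa i.
  apply/matrixP => i j; rewrite (ord1 j) rhs_entry A2E mx_col mxE.
  under eq_bigr do rewrite mxE.
  rewrite -hz; ring.
move=> i; rewrite /eq_vec -E mulKmx // mxE //.
Qed.



Definition qsol (R : realType) (n : nat) (alpha beta : R) (d : 'I_n -> R) i :=
  (d i + beta * (\sum_k d k) / (alpha + beta - n%:R * beta)) / (alpha + beta).

Lemma aux_field (R : realType) (alpha beta S m : R) : alpha + beta != 0 -> alpha + beta - m * beta != 0 ->
  (alpha + beta)^-1 * S +
  m * (beta * S / (alpha + beta - m * beta) / (alpha + beta)) =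
  (S + m * (beta * S / (alpha + beta - m * beta))) / (alpha + beta).
Proof. move=> h1 h2. field. by rewrite h1 h2. Qed.

Lemma qsol_prop (R : realType) (n : nat) (alpha beta : R) (d : 'I_n -> R) i :
  alpha + beta != 0 -> alpha + beta - n%:R * beta != 0 ->
  (alpha + beta) * qsol alpha beta d i - beta * \sum_k qsol alpha beta d k = d i.
Proof.
move=> h1 h2.
have -> : \sum_k qsol alpha beta d k =
   (\sum_k d k + n%:R * (beta * (\sum_k d k) / (alpha + beta - n%:R * beta))) / (alpha + beta).
  rewrite (eq_bigr (fun k => (alpha + beta)^-1 * d k +
     (beta * (\sum_k d k) / (alpha + beta - n%:R * beta)) / (alpha + beta))); last first.
    by move=> k _; rewrite /qsol; field; rewrite ?h1 ?h2.
  rewrite sum_lin; move: h1 h2; set S := \sum_k d k; exact: aux_field.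
rewrite /qsol. field. by rewrite h1 h2.
Qed.

Lemma Aop_inj (R : realType) (n : nat) (alpha beta : R) (d q : 'I_n -> R) :
  alpha + beta != 0 -> alpha + beta - n%:R * beta != 0 ->
  (forall i, (alpha + beta) * q i - beta * \sum_k q k = d i) ->
  forall i, q i = qsol alpha beta d i.
Proof.
move=> h1 h2 hq.
have HS : \sum_k d k = (alpha + beta - n%:R * beta) * \sum_k q k.
  under eq_bigr do rewrite -hq.
  rewrite (eq_bigr (fun k => (alpha + beta) * q k + (- beta * \sum_k q k))); last by move=> k _; ring.
  rewrite sum_lin. ring.
move=> i; rewrite /qsol HS -(hq i).
field. by rewrite h1 h2.
Qed.



Unset Implicit Arguments. Set Strict Implicit.

Theorem theorem3 (R : realType) (n : nat) (D0 alpha beta : R) (pa : 'I_n -> R) :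
  (2 <= n)%N -> 0 < D0 ->
  0 < (n.-1)%:R * beta -> (n.-1)%:R * beta < alpha ->
  (forall i, 0 <= pa i) ->
  (* existence, for any payment vector pd, iff the condition holds *)
  (forall pd : 'I_n -> R,
     (exists ps pc : 'I_n -> R, is_equilibrium D0 alpha beta pa pd ps pc)
     <-> eq_condition D0 alpha beta pa) /\
  (eq_condition D0 alpha beta pa ->
     (* for every pd exactly one equilibrium *)
     (forall pd : 'I_n -> R,
        (exists ps pc : 'I_n -> R, is_equilibrium D0 alpha beta pa pd ps pc) /\
        (forall ps pc ps' pc' : 'I_n -> R,
           is_equilibrium D0 alpha beta pa pd ps pc ->
           is_equilibrium D0 alpha beta pa pd ps' pc' ->
           ps =1 ps' /\ pc =1 pc')) /\
     (* constants g, h, demand d, revenues, independent of pd *)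
     exists (g h d : 'I_n -> R) (uISP : R) (uCP : 'I_n -> R),
       forall pd ps pc : 'I_n -> R,
         is_equilibrium D0 alpha beta pa pd ps pc ->
         (forall i : 'I_n,
            [/\ ps i = g i - pd i, pc i = h i + pd i &
                ps i + pc i = g i + h i] /\
            [/\ demand D0 alpha beta ps pc i = d i,
                ps i + pd i = g i &
                pc i + pa i - pd i = h i + pa i]) /\
         U_ISP D0 alpha beta pd ps pc = uISP /\
         (forall i : 'I_n, U_CP D0 alpha beta pa pd ps pc i = uCP i)).
Proof.
move=> hn hD hb hba hpa.
have hn1 : (0 < (n.-1)%:R :> R) by rewrite ltr0n -ltnS prednK ?(leq_trans _ hn).
have b0 : 0 < beta by move: hb; rewrite pmulr_rgt0.
have nR : n%:R = (n.-1)%:R + 1 :> R by rewrite natr1 prednK // (leq_trans _ hn).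
have a0 : 0 < alpha by lra.
have k0 : 0 < alpha + beta - n%:R * beta by rewrite nR; lra.
have ab0 : alpha + beta != 0 by apply/eqP; lra.
have k0' : alpha + beta - n%:R * beta != 0 by apply/eqP; lra.
have hu : A_mx n alpha beta + (2 * alpha)%:M \in unitmx.
  rewrite A2E; apply: unit_M; apply/eqP; lra.
pose y (i : 'I_n) : R := eq_vec D0 alpha beta pa i ord0.
have sys := @eqvec_sys R n D0 alpha beta pa hu.
pose g := qsol alpha beta (fun i => alpha * y i).
have hg := fun i => qsol_prop (fun i => alpha * y i) i ab0 k0'.
have char : forall pd ps pc, is_equilibrium D0 alpha beta pa pd ps pc ->
    forall i, [/\ ps i + pd i = g i, pc i + pa i - pd i = y i &
                  demand D0 alpha beta ps pc i = alpha * y i].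
  move=> pd ps pc heq.
  have hG := FOC_ISP (ltW b0) heq.
  have hH := FOC_CP a0 heq.
  pose z i := pc i + pa i - pd i.
  set Q := \sum_j (ps j + pd j).
  have SX : \sum_j (ps j + pc j) = Q + \sum_j z j - \sum_j pa j.
    transitivity (\sum_j ((ps j + pd j) + z j) - \sum_j pa j).
      by rewrite -sumrB; apply: eq_bigr => j _; rewrite /z; ring.
    by rewrite big_split.
  have hz : forall i, y i = z i.
    apply: eqvec_char => // i.
    have e1 := hH i; have e2 := hG i; rewrite /Gv -/Q in e2.
    have e3 := demandE D0 alpha beta ps pc i; rewrite SX in e3.
    rewrite /Hv in e1. rewrite /z. 
    move: e1 e2 e3; set dd := demand _ _ _ _ _ i; rewrite -/(z i).
    have -> : ps i + pc i = (ps i + pd i) + z i - pa i by rewrite /z; ring.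
    move=> e1 e2 e3. nra.
  have hd : forall k, demand D0 alpha beta ps pc k = alpha * y k.
    move=> k; have := hH k; rewrite /Hv hz /z; lra.
  have hq : forall k, (alpha + beta) * (ps k + pd k) - beta * \sum_j (ps j + pd j) = alpha * y k.
    move=> k; have := hG k; rewrite /Gv hd; lra.
  move=> i; split.
  - exact: (@Aop_inj R n alpha beta (fun k => alpha * y k) (fun k => ps k + pd k) ab0 k0' hq i).
  - by rewrite hz.
  - exact: hd.
have exist : eq_condition D0 alpha beta pa -> forall pd,
    is_equilibrium D0 alpha beta pa pd (fun i => g i - pd i) (fun i => y i - pa i + pd i).
  move=> hc pd.
  have hd : forall i, demand D0 alpha beta (fun i => g i - pd i) (fun i => y i - pa i + pd i) i = alpha * y i.
    move=> i; rewrite demandE.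
    have SX : \sum_j ((g j - pd j) + (y j - pa j + pd j)) = \sum_j (g j + y j) - \sum_j pa j.
      by rewrite -sumrB; apply: eq_bigr => j _; ring.
    rewrite SX big_split /=.
    have e1 : (alpha + beta) * g i - beta * \sum_k g k = alpha * y i := hg i.
    have e2 : (3 * alpha + beta) * y i - beta * \sum_k y k = D0 + (alpha + beta) * pa i - beta * \sum_k pa k := sys i.
    have -> : g i - pd i + (y i - pa i + pd i) = g i + y i - pa i by ring.
    nra.
  apply: suff_eq (ltW b0) (ltW k0) (ltW a0) _ _ _.
  - by move=> i; rewrite hd; apply: mulr_gt0 => //; exact: hc i.
  - move=> k; rewrite /Gv hd.
    have -> : \sum_j (g j - pd j + pd j) = \sum_j g j by apply: eq_bigr => j _; ring.
    have -> : g k - pd k + pd k = g k by ring.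
    have e1 : (alpha + beta) * g k - beta * \sum_j g j = alpha * y k := hg k.
    lra.
  - move=> i; rewrite /Hv hd.
    have -> : y i - pa i + pd i + pa i - pd i = y i by ring.
    ring.
split.
- move=> pd; split.
  + case=> ps [pc heq] i.
    have [_ _ hd] := char _ _ _ heq i.
    case: heq => feas _ _.
    have := feas i; rewrite hd pmulr_rgt0 //.
  + by move=> hc; exists (fun i => g i - pd i), (fun i => y i - pa i + pd i); apply: exist.
- move=> hc; split.
  + move=> pd; split.
      by exists (fun i => g i - pd i), (fun i => y i - pa i + pd i); apply: exist.
    move=> ps pc ps' pc' h1 h2; split=> i.
      have [a1 b1 _] := char _ _ _ h1 i; have [a2 b2 _] := char _ _ _ h2 i; lra.
    have [a1 b1 _] := char _ _ _ h1 i; have [a2 b2 _] := char _ _ _ h2 i; lra.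
  + exists g, (fun i => y i - pa i), (fun i => alpha * y i),
      (\sum_i alpha * y i * g i), (fun i => alpha * y i * y i).
    move=> pd ps pc heq; have C := char _ _ _ heq.
    split; [|split].
    * move=> i; have [a b c] := C i; split; split => /=; lra.
    * by rewrite /U_ISP; apply: eq_bigr => i _; have [a _ c] := C i; rewrite c a.
    * by move=> i; rewrite /U_CP; have [_ b c] := C i; rewrite c b.
Qed.
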